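(* For any constant $\delta\in(0,1)$ there exists an infinite family of graphs $\{G_n\}$ such that $G_n$ has $n$ nodes and contains a clique of size $\delta n$, but for all $\epsilon<\min\left\{\frac{1-\delta}{1+\delta},\frac19\right\}$ and for sufficiently large $n$, the shingles algorithm cannot find an $\epsilon$-near clique with at least $(1-\epsilon)\delta n$ nodes in $G_n$ (i.e., whatever the random IDs drawn, no candidate set it can output is an $\epsilon$-near clique with at least $(1-\epsilon)\delta n$ nodes).
   Context: Each undirected edge $\{u,v\}$ is counted as two directed edges. For $0\le\epsilon\le1$, a set $D$ of nodes of a graph $(V,E)$ is an $\epsilon$-near clique if $|\{(u,v)\in D\times D : \{u,v\}\in E\}|\ge(1-\epsilon)|D|(|D|-1)$. The shingles algorithm (a distributed algorithm): each node picks a random ID from a space large enough that collisions are negligible and sends it to all neighbors; each node then takes as its label the smallest ID among itself and its neighbors; nodes with the same label form a candidate set; each candidate set computes its density by having every member send its degree within the set to the set's leader (the node whose ID is the label), and only sets of sufficient size and density survive; conflicts between overlapping candidate sets are resolved in favor of the larger set, and for equal sizes in favor of the smaller label. The output near-cliques are the surviving candidate sets. *)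

(* Defs.v *)
From HB Require Import structures.
From mathcomp Require Import all_boot all_order all_algebra.
From mathcomp Require Import reals.
Set Implicit Arguments. Unset Strict Implicit. Unset Printing Implicit Defensive.
Import Order.TTheory GRing.Theory Num.Theory.
Local Open Scope ring_scope.

Definition simple_graph (T : finType) (e : rel T) : Prop :=
  symmetric e /\ irreflexive e.

Definition is_clique (T : finType) (e : rel T) (K : {set T}) : Prop :=
  forall x y, x \in K -> y \in K -> x != y -> e x y.

(* Number of directed edges inside D (each undirected edge counted twice). *)
Definition dir_edges_in (T : finType) (e : rel T) (D : {set T}) : nat :=
  #|[set p : T * T | [&& p.1 \in D, p.2 \in D & e p.1 p.2]]|.

Definition near_clique (R : realType) (T : finType) (e : rel T) (eps : R)
    (D : {set T}) : Prop :=
  (1 - eps) * (#|D|%:R) * (#|D|%:R - 1) <= (dir_edges_in e D)%:R.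

(* Shingles: label of v = the node of its closed neighbourhood with the
   smallest (random, pairwise distinct) ID. *)
Definition shingle_label (T : finType) (e : rel T) (id : T -> nat) (v : T) : T :=
  [arg min_(u < v | (u == v) || e v u) id u].

Definition candidate_set (T : finType) (e : rel T) (id : T -> nat) (u : T)
    : {set T} :=
  [set v | shingle_label e id v == u].

(* Main.v *)
Require Import Defs.
From HB Require Import structures.
From mathcomp Require Import all_boot all_order all_algebra.
From mathcomp Require Import reals zify ring lra.
Set Implicit Arguments. Unset Strict Implicit. Unset Printing Implicit Defensive.
Import Order.TTheory GRing.Theory Num.Theory.

Section Graph.
Variables (T : finType) (inK side : T -> bool).

Definition eG : rel T := fun x y =>
  (x != y) && ((inK x && inK y) || ((side x == side y) && (inK x || inK y))).

Definition nb (v w : T) := (w == v) || eG v w.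

Lemma eG_sym : symmetric eG.
Proof.
move=> x y; rewrite /eG eq_sym; congr (_ && _).
by case: (inK x); case: (inK y); case: (side x); case: (side y).
Qed.

Lemma eG_irr : irreflexive eG.
Proof. by move=> x; rewrite /eG eqxx. Qed.

Lemma nbK v z : inK v -> nb v z = inK z || (side z == side v).
Proof.
move=> Hv; rewrite /nb /eG (eq_sym v z); case: (eqVneq z v) => [->|_] /=.
  by rewrite Hv eqxx orbT.
by rewrite Hv /= andbT; case: (inK z); case: (side z); case: (side v).
Qed.

Lemma nbL v z : ~~ inK v -> nb v z = (z == v) || (inK z && (side z == side v)).
Proof.
move=> Hv; rewrite /nb /eG (eq_sym v z); case: (eqVneq z v) => [->|_] //=.
rewrite (negbTE Hv) /=; case: (inK z); case: (side z); case: (side v) => //.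
Qed.

Variables (id : T -> nat) (idI : injective id).

Lemma inC u v : v \in candidate_set eG id u <->
  (nb v u /\ forall w, nb v w -> (id u <= id w)%N).
Proof.
rewrite inE /shingle_label.
have P0 : nb v v by rewrite /nb eqxx.
case: (@arg_minnP T v (nb v) id P0) => l Hl Hmin; split.
  by move/eqP=> <-.
move=> [Hu Hu']; apply/eqP; apply: idI; apply/eqP; rewrite eqn_leq.
by rewrite Hmin // Hu'.
Qed.

Definition KS s := [set x | inK x && (side x == s)].
Definition LS s := [set x | ~~ inK x && (side x == s)].

Section U.
Variable u : T.
Let C := candidate_set eG id u.
Let sg := side u.

Lemma P0 : C \subset [set v | inK v || (side v == sg)].
Proof.
apply/subsetP=> v /inC [Hu _]; rewrite inE; move: Hu; rewrite /nb /eG.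
case: eqP => [<-|_] /=; first by rewrite /sg eqxx orbT.
move=> /andP[_]; rewrite /sg; case: (inK v); case: (inK u); case: (side v); case: (side u) => //=.
Qed.

Lemma P1 : ~~ inK u -> C \subset u |: KS sg.
Proof.
move=> Hu; apply/subsetP=> v /inC [Hv _]; rewrite !inE; move: Hv.
rewrite /nb /eG; case: eqP => [->|_]; first by rewrite eqxx.
move=> /andP[_]; rewrite (negbTE Hu) /sg.
by case: (inK v); case: (side v); case: (side u) => //=; rewrite orbT.
Qed.

Lemma P2 v : inK u -> v \in C -> inK v -> side v = sg ->
  KS sg \subset C /\ LS sg \subset C.
Proof.
move=> Hu /inC [_ Hm] Hv Hs.
have key w : side w = sg -> w \in C.
  move=> Hw; apply/inC; case Kw: (inK w).
    rewrite nbK // Hu; split=> // z; rewrite nbK // Hw -Hs => Hz.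
    by apply: Hm; rewrite nbK.
  have nKw : ~~ inK w by rewrite Kw.
  rewrite nbL // Hu /= Hw /sg eqxx orbT; split=> //.
  move=> z; rewrite nbL //; case/orP=> [/eqP->|/andP[Kz Sz]]; apply: Hm; rewrite nbK //.
    by rewrite Hw Hs eqxx orbT.
  by rewrite Kz.
split; apply/subsetP=> w; rewrite inE => /andP[_ /eqP]; exact: key.
Qed.

Lemma P3 v : inK u -> v \in C -> inK v -> KS (side v) \subset C.
Proof.
move=> Hu /inC [_ Hm] Hv; apply/subsetP=> w; rewrite inE => /andP[Kw /eqP Sw].
apply/inC; rewrite nbK // Hu; split=> // z; rewrite nbK // Sw => Hz.
by apply: Hm; rewrite nbK.
Qed.

End U.

Lemma dir_sum (e : rel T) (D : {set T}) :
  dir_edges_in e D = (\sum_(x in D) #|[set y in D | e x y]|)%N.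
Proof.
rewrite /dir_edges_in -sum1_card; symmetry.
under eq_bigr do rewrite -sum1_card.
rewrite pair_big_dep; apply: eq_bigl => p; rewrite !inE.
by case: p.
Qed.

Lemma cardU_le (A B : {set T}) : (#|A :|: B| <= #|A| + #|B|)%N.
Proof. by rewrite -cardsUI leq_addr. Qed.

Section Edges.
Variables (D : {set T}) (sg : bool).
Hypothesis HD : D \subset [set v | inK v || (side v == sg)].
Let a := #|D :&: KS sg|.
Let b := #|D :&: KS (~~ sg)|.
Let c := #|D :&: LS sg|.

Lemma E1 : (D :\: KS sg) :&: KS (~~sg) = D :&: KS (~~sg).
Proof.
apply/setP=> x; rewrite !inE; case Dx: (x \in D); last by rewrite ?andbF.
rewrite /=.
have := subsetP HD x Dx; rewrite inE.
by case: (inK x); case: (side x); case: sg.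
Qed.

Lemma E2 : (D :\: KS sg) :\: KS (~~sg) = D :&: LS sg.
Proof.
apply/setP=> x; rewrite !inE; case Dx: (x \in D); last by rewrite ?andbF.
rewrite /=.
have := subsetP HD x Dx; rewrite inE.
by case: (inK x); case: (side x); case: sg.
Qed.

Lemma cardD3 : #|D| = (a + b + c)%N.
Proof.
rewrite -(cardsID (KS sg) D) -(cardsID (KS (~~sg)) (D :\: KS sg)) E1 E2.
by rewrite addnA.
Qed.

Lemma edge_bound :
  (dir_edges_in eG D + #|D| <= a * #|D| + b * (a + b) + c * (a + 1))%N.
Proof.
rewrite dir_sum -sum1_card -big_split /=.
pose g x := if x \in KS sg then #|D| else if x \in KS (~~sg) then (a + b)%N
            else (a + 1)%N.
apply: (@leq_trans (\sum_(x in D) g x)).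
  apply: leq_sum => x Dx.
  set N := [set y in D | eG x y].
  have xN : x \notin N by rewrite inE eG_irr andbF.
  have -> : (#|N| + 1 = #|x |: N|)%N by rewrite cardsU1 xN addnC.
  rewrite /g; case: ifP => Hx1.
    apply: subset_leq_card; apply/subsetP=> y; rewrite !inE.
    by case/orP=> [/eqP->|/andP[]].
  case: ifP => Hx2.
    apply: (leq_trans _ (cardU_le _ _)); apply: subset_leq_card.
    apply/subsetP=> y; rewrite !inE; case/orP=> [/eqP->|/andP[Dy exy]].
      by move: Hx2; rewrite inE Dx => ->; rewrite orbT.
    rewrite Dy /=; move: Hx2 exy; have := subsetP HD y Dy; rewrite !inE /eG.
    by case: (inK x); case: (side x); case: (inK y); case: (side y); case: sg;
      rewrite ?andbF ?andbT ?orbF ?orbT.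
  rewrite cardsU1 xN addnC leq_add2r; apply: subset_leq_card.
  apply/subsetP=> y; rewrite !inE => /andP[Dy exy]; rewrite Dy /=.
  move: Hx1 Hx2 exy; have := subsetP HD x Dx; rewrite !inE /eG.
  by case: (inK x); case: (side x); case: (inK y); case: (side y); case: sg;
    rewrite ?andbF ?andbT ?orbF ?orbT.
rewrite (big_setID (KS sg)) (big_setID (A := D :\: KS sg) (KS (~~sg))) /= E1 E2.
rewrite (eq_bigr (fun _ => #|D|)); last by move=> x; rewrite inE /g => /andP[_ ->].
rewrite (eq_bigr (fun _ => (a + b)%N) (P := fun x => x \in D :&: KS (~~sg))); last first.
  move=> x; rewrite !inE /g => /andP[_ Hx]; rewrite !inE Hx.
  by move: Hx; case: (inK x); case: (side x); case: sg.
rewrite (eq_bigr (fun _ => (a + 1)%N) (P := fun x => x \in D :&: LS sg)); last first.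
  move=> x; rewrite !inE /g => /andP[_ Hx]; rewrite !inE.
  by move: Hx; case: (inK x); case: (side x); case: sg.
by rewrite !sum_nat_const -/a -/b -/c muln1 addnA.
Qed.

End Edges.

Section Cases.
Variables (h m : nat).
Hypothesis hK : forall s, #|KS s| = h.
Hypothesis hL : forall s, #|LS s| = m.

Lemma cases u :
  let C := candidate_set eG id u in
  let s := #|C| in let E := dir_edges_in eG C in
  [\/ (s <= h + 1)%N,
       (exists b, (b <= h)%N /\ (E + b <= b * b)%N),
       s = (h + m)%N /\ (E + s <= h * s + m * (h + 1))%N |
       s = (h + h + m)%N /\ (E + s <= h * s + h * (h + h) + m * (h + 1))%N].
Proof.
move=> C s E.
case Ku: (inK u); last first.
  apply: Or41; rewrite /s /C; apply: leq_trans (subset_leq_card (P1 (negbT Ku))) _.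
  by rewrite cardsU1 hK addnC leq_add2l leq_b1.
have HD := P0 u.
have EB := edge_bound HD.
have Cs := cardD3 HD.
rewrite -/C -/E in EB Cs *.
set a := #|C :&: KS (side u)| in EB Cs.
set b := #|C :&: KS (~~ side u)| in EB Cs.
set c := #|C :&: LS (side u)| in EB Cs.
have bh : (b <= h)%N by rewrite -(hK (~~ side u)); apply: subset_leq_card; apply: subsetIr.
case: (posnP a) => a0.
  apply: Or42; exists b; split => //.
  move: EB; rewrite Cs a0 /=; nia.
have [v] : exists v, v \in C :&: KS (side u).
  by apply/set0Pn; rewrite -card_gt0.
rewrite in_setI => /andP[vC]; rewrite inE => /andP[Kv /eqP Sv].
have [s1 s2] := P2 Ku vC Kv Sv.
have ah : a = h by rewrite /a (setIidPr s1) hK.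
have cm : c = m by rewrite /c (setIidPr s2) hL.
case: (posnP b) => b0.
  apply: Or43; rewrite /s Cs ah cm b0 addn0; split => //.
  move: EB; rewrite Cs ah cm b0; nia.
have [w] : exists w, w \in C :&: KS (~~ side u).
  by apply/set0Pn; rewrite -card_gt0.
rewrite in_setI => /andP[wC]; rewrite inE => /andP[Kw /eqP Sw].
have s3 := P3 Ku wC Kw.
rewrite Sw in s3.
have bh' : b = h by rewrite /b (setIidPr s3) hK.
apply: Or44; rewrite /s Cs ah cm bh'; split => //.
move: EB; rewrite Cs ah cm bh'; nia.
Qed.

End Cases.
End Graph.


Lemma range_sum lo hi n :
  (\sum_(0 <= i < n) ((lo <= i) && (i < hi) : nat) = minn n hi - lo)%N.
Proof.
elim: n => [|n IH]; first by rewrite big_nil min0n.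
rewrite big_nat_recr //= IH.
case: (leqP lo n) => Hl; case: (ltnP n hi) => Hh /=; lia.
Qed.

Lemma card_range n (Q : pred nat) lo hi :
  (forall i, (i < n)%N -> Q i = (lo <= i) && (i < hi)) ->
  #|[set x : 'I_n | Q (val x)]| = (minn n hi - lo)%N.
Proof.
move=> HQ; rewrite -sum1_card big_mkcond /=.
transitivity (\sum_(i < n) (if Q i then 1 else 0))%N.
  by apply: eq_bigr => i _; rewrite inE.
rewrite -(big_mkord (fun _ => true) (fun i => if Q i then 1%N else 0%N)).
rewrite -range_sum; apply: eq_big_nat => i /andP[_ Hi].
by rewrite HQ //; case: ((lo <= i) && (i < hi)).
Qed.



Local Open Scope ring_scope.


Lemma tx (R : realType) (delta eps P S : R) :
  0 <= eps -> eps < 1/9 -> 3 < delta * P ->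
  (1 - eps) * delta * (2 * P) <= S -> 16 / 9 * (delta * P) <= S.
Proof.
move=> e0 e9 x3 big.
have xp : 0 <= delta * P by lra.
have e : eps * (delta * P) <= 1 / 9 * (delta * P) by apply: ler_wpM2r => //; lra.
have r : (1 - eps) * delta * (2 * P) = 2 * (delta * P) - 2 * (eps * (delta * P)) by ring.
move: big; rewrite r; lra.
Qed.

Lemma case1 (R : realType) (delta eps P H S : R) :
  0 <= eps -> eps < 1/9 -> 3 < delta * P -> H <= delta * P + 1 ->
  (1 - eps) * delta * (2 * P) <= S -> S <= H + 1 -> False.
Proof. move=> e0 e9 x3 Hh big; have := tx e0 e9 x3 big; lra. Qed.

Lemma case2 (R : realType) (delta eps P H S E B : R) :
  0 <= eps -> eps < 1/9 -> 3 < delta * P -> H <= delta * P + 1 ->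
  delta * P < H ->
  (1 - eps) * delta * (2 * P) <= S -> (1 - eps) * S * (S - 1) <= E ->
  0 <= B -> B <= H -> E + B <= B * B -> False.
Proof.
move=> e0 e9 x3 Hhi Hlo big NC B0 BH EB'.
have EB : E <= B * B - B by lra.
have t := tx e0 e9 x3 big.
move: (delta * P) x3 Hhi Hlo t => x x3 Hhi Hlo t.
have H1 : 1 <= H by lra.
have h3 : B * B - B <= H * H - H by nra.
have h4 : H * H - H <= (x + 1) * x by nra.
have S1 : 1 <= 16 / 9 * x by lra.
have h1 : 16 / 9 * x * (16 / 9 * x - 1) <= S * (S - 1) by nra.
have h2 : 8 / 9 * (S * (S - 1)) <= (1 - eps) * S * (S - 1) by nra.
nra.
Qed.

Lemma case3 (R : realType) (delta eps P H M S E : R) :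
  0 < delta -> 0 <= eps -> eps < 1/9 -> 3 < delta * P -> H <= delta * P + 1 ->
  H + M = P -> 16 <= P ->
  (1 - eps) * delta * (2 * P) <= S -> (1 - eps) * S * (S - 1) <= E ->
  S = P -> E + P <= H * P + M * (H + 1) -> False.
Proof.
move=> d0 e0 e9 x3 Hhi HMP P16 big NC SP EB'.
have EB : E <= H * P + M * H + M - P by move: EB'; rewrite mulrDr mulr1; lra.
have hd : 2 * (1 - eps) * delta <= 1.
  have : (2 * (1 - eps) * delta - 1) * P <= 0 by move: big; rewrite SP; nra.
  nra.
have hd2 : delta <= 9 / 16 by nra.
have xP : delta * P <= 9 / 16 * P by nra.
have Mlo : 7 / 16 * P - 1 <= M by lra.
have key : M * M - M <= eps * (P * P - P).
  have : (1 - eps) * (P * (P - 1)) <= P * P - P - M * M + M.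
    have -> : P * P - P - M * M + M = H * P + M * H + M - P.
      by rewrite -HMP; ring.
    move: NC; rewrite SP; lra.
  lra.
have k2 : eps * (P * P - P) <= 1 / 9 * (P * P - P) by nra.
have k3 : (7 / 16 * P - 1) * (7 / 16 * P - 2) <= M * M - M by nra.
nra.
Qed.

Lemma case4 (R : realType) (delta eps P H M S E : R) :
  0 < delta -> 0 <= eps -> 3 < delta * P -> H <= delta * P + 1 ->
  H + M = P -> 2 < P * (1 - delta - eps * (1 + delta)) -> eps < 1 ->
  16 <= P -> 0 <= H -> (1 - eps) * S * (S - 1) <= E ->
  S = P + H -> E + S <= H * S + H * (H + H) + M * (H + 1) -> False.
Proof.
move=> d0 e0 x3 Hhi HMP Pg e1 P16 H0 NC SP EB'.
have EB : E <= H * S + 2 * (H * H) + M * H + M - S.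
  by move: EB'; rewrite !mulrDr mulr1; lra.
have S1 : 1 < S by rewrite SP; lra.
have k : (M - eps * S) * (S - 1) <= 0.
  have e2 : H * S + 2 * (H * H) + M * H + M - S = S * (S - 1) - M * (S - 1).
    by rewrite SP -HMP; ring.
  move: NC EB; rewrite e2; nra.
have k2 : M <= eps * S by nra.
have k3 : P - H <= eps * (P + H) by move: k2; rewrite SP -HMP; lra.
nra.
Qed.

Section Main.
Variables (R : realType) (delta : R).

Definition hh n := minn n./2 (Num.truncn (delta * (n./2)%:R)).+1.
Definition mm n := (n./2 - hh n)%N.
Definition inKn n (i : nat) := (i < 2 * hh n)%N.
Definition siden n (i : nat) :=
  (i < hh n)%N || ((2 * hh n <= i)%N && (i < 2 * hh n + mm n)%N).
Definition Gr n : rel 'I_n := eG (fun x : 'I_n => inKn n x) (fun x => siden n x).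

Lemma counts n : ~~ odd n ->
  (forall s, #|KS (fun x : 'I_n => inKn n x) (fun x => siden n x) s| = hh n) /\
  (forall s, #|LS (fun x : 'I_n => inKn n x) (fun x => siden n x) s| = mm n).
Proof.
move=> ev.
have np : n = (n./2 + n./2)%N by have := odd_double_half n; rewrite (negbTE ev) add0n addnn.
have hp : (hh n <= n./2)%N by rewrite /hh geq_minl.
split=> [[|]|[|]].
- apply: etrans (@card_range n (fun i => inKn n i && (siden n i == true)) 0 (hh n) _) _.
    by move=> i _; rewrite /inKn /siden /mm; lia.
  lia.
- apply: etrans (@card_range n (fun i => inKn n i && (siden n i == false)) (hh n) (2 * hh n) _) _.
    by move=> i _; rewrite /inKn /siden /mm; lia.
  lia.
- apply: etrans (@card_range n (fun i => ~~ inKn n i && (siden n i == true)) (2 * hh n) (2 * hh n + mm n) _) _.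
    by move=> i _; rewrite /inKn /siden /mm; lia.
  rewrite /mm; lia.
- apply: etrans (@card_range n (fun i => ~~ inKn n i && (siden n i == false)) (2 * hh n + mm n) n _) _.
    by move=> i Hi; rewrite /inKn /siden /mm; lia.
  rewrite /mm; lia.
Qed.


Lemma hh_le n : (hh n <= n./2)%N.
Proof. by rewrite /hh geq_minl. Qed.

Lemma hh_lo n : 0 < delta -> delta < 1 -> (0 < n./2)%N ->
  delta * (n./2)%:R < (hh n)%:R.
Proof.
move=> d0 d1 p0; rewrite /hh /minn; case: ifP => _.
  have : 0 < (n./2)%:R :> R by rewrite ltr0n.
  nra.
exact: truncnS_gt.
Qed.

Lemma hh_hi n : 0 < delta -> (hh n)%:R <= delta * (n./2)%:R + 1.
Proof.
move=> d0.
apply: (@le_trans _ _ ((Num.truncn (delta * (n./2)%:R)).+1)%:R).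
  by rewrite ler_nat /hh geq_minr.
rewrite -natr1 lerD2r truncn_le mulr_ge0 // ?ler0n //.
exact: ltW.
Qed.

End Main.

Unset Implicit Arguments.
Theorem claim3p1 (R : realType) (delta : R) :
  0 < delta < 1 ->
  exists (S : pred nat) (G : forall n : nat, rel 'I_n),
    (forall m : nat, exists n : nat, (m <= n)%N /\ S n) /\
    (forall n : nat, S n ->
       simple_graph (G n) /\
       exists K : {set 'I_n}, is_clique (G n) K /\ delta * n%:R <= (#|K|)%:R) /\
    (forall eps : R,
       0 <= eps -> eps < Num.min ((1 - delta) / (1 + delta)) (1 / 9) ->
       exists N : nat, forall n : nat, S n -> (N <= n)%N ->
         forall id : 'I_n -> nat, injective id ->
         forall u : 'I_n,
           ~ (near_clique (G n) eps (candidate_set (G n) id u) /\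
              (1 - eps) * delta * n%:R <= (#|candidate_set (G n) id u|)%:R)).
Proof.
case/andP=> d0 d1.
exists (fun n => ~~ odd n), (@Gr R delta).
split; [|split].
- move=> m; exists (m.*2); by rewrite /= odd_double -addnn leq_addr.
- move=> n ev; split; first by split; [apply: eG_sym | apply: eG_irr].
  exists [set x : 'I_n | inKn delta n x]; split.
    by move=> x y; rewrite !inE => Kx Ky nxy; rewrite /Gr /eG nxy Kx Ky.
  have np : n = (n./2 + n./2)%N.
    by have := odd_double_half n; rewrite (negbTE ev) add0n addnn.
  have hp := hh_le delta n.
  rewrite (@card_range n (fun i => inKn delta n i) 0 (2 * hh delta n)); last first.
    by move=> i _; rewrite /inKn.
  have -> : (minn n (2 * hh delta n) - 0 = hh delta n + hh delta n)%N by lia.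
  rewrite {1}np !natrD.
  case: (posnP n./2) => p0.
    by rewrite p0 !(mulr0n, addr0, mulr0) addr_ge0 ?ler0n.
  have := hh_lo d0 d1 p0; lra.
- move=> eps e0 ebd.
  have [eA eB] : eps < (1 - delta) / (1 + delta) /\ eps < 1 / 9.
    by move: ebd; rewrite lt_min => /andP.
  have eg : eps * (1 + delta) < 1 - delta by rewrite -ltr_pdivlMr //; lra.
  set g := 1 - delta - eps * (1 + delta).
  have g0 : 0 < g by rewrite /g; lra.
  have [M [Mgt M16]] : exists M : nat, 3 / delta + 2 / g < M%:R /\ (16 <= M)%N.
    exists ((Num.truncn (3 / delta + 2 / g)).+1 + 16)%N; split; last by rewrite leq_addl.
    rewrite natrD; apply: lt_le_trans (truncnS_gt (3 / delta + 2 / g)) _.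
    by rewrite lerDl ler0n.
  exists (2 * M)%N => n ev nN id idI u [NC big].
  set p := n./2.
  have np : n = (p + p)%N.
    by have := odd_double_half n; rewrite (negbTE ev) add0n addnn.
  have pM : (M <= p)%N by lia.
  have p0 : (0 < p)%N by lia.
  have pMr : M%:R <= p%:R :> R by rewrite ler_nat.
  have t1 : 0 < 3 / delta by rewrite divr_gt0.
  have t2 : 0 < 2 / g by rewrite divr_gt0.
  have x3 : 3 < delta * p%:R.
    have : 3 / delta < p%:R.
      apply: le_lt_trans _ (lt_le_trans Mgt pMr).
      by rewrite lerDl ltW.
    by move=> h; rewrite mulrC -ltr_pdivrMr.
  have Pg : 2 < p%:R * g.
    have : 2 / g < p%:R.
      apply: le_lt_trans _ (lt_le_trans Mgt pMr).
      by rewrite lerDr ltW.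
    by move=> h; rewrite -ltr_pdivrMr.
  have P16 : 16 <= p%:R :> R.
    by rewrite (ler_nat R 16); apply: leq_trans M16 pM.
  have [hK hL] := counts delta ev.
  have Hlo := hh_lo d0 d1 p0.
  have Hhi := hh_hi n d0.
  have hp := hh_le delta n.
  have HMP : (hh delta n + mm delta n = p)%N by rewrite /mm subnKC.
  have HMPr : (hh delta n)%:R + (mm delta n)%:R = p%:R :> R by rewrite -natrD HMP.
  rewrite /near_clique /Gr in NC big.
  have nR : n%:R = p%:R + p%:R :> R by rewrite {1}np natrD.
  rewrite nR in big.
  have big' : (1 - eps) * delta * (2 * p%:R) <= #|candidate_set
      (eG (fun x : 'I_n => inKn delta n x) (fun x : 'I_n => siden delta n x)) id u|%:R.
    by have -> : 2 * p%:R = p%:R + p%:R :> R by ring.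
  have := cases idI hK hL u => /=.
  case=> [c1 | [b [bh EB]] | [sE EB] | [sE EB]].
  + apply: (case1 e0 eB x3 Hhi big').
    rewrite natr1 ler_nat -addn1; exact: c1.
  + move: EB; rewrite -(ler_nat R) natrD natrM => EB.
    apply: (case2 e0 eB x3 Hhi Hlo big' NC (ler0n _ b) _ EB).
    rewrite ler_nat; exact: bh.
  + have Sr : #|candidate_set (eG (fun x : 'I_n => inKn delta n x)
        (fun x : 'I_n => siden delta n x)) id u|%:R = p%:R :> R.
      by rewrite sE HMP.
    move: EB; rewrite -(ler_nat R) !natrD !natrM !natrD Sr ?mulr1n => EB.
    exact: (case3 d0 e0 eB x3 Hhi HMPr P16 big' NC Sr EB).
  + have Sr : #|candidate_set (eG (fun x : 'I_n => inKn delta n x)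
        (fun x : 'I_n => siden delta n x)) id u|%:R = p%:R + (hh delta n)%:R :> R.
      by rewrite sE -HMP -!natrD addnAC.
    move: EB; rewrite -(ler_nat R) !natrD !natrM !natrD ?mulr1n => EB.
    have e1 : eps < 1 by lra.
    exact: (case4 d0 e0 x3 Hhi HMPr Pg e1 P16 (ler0n _ _) NC Sr EB).
Qed.
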